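(* Let $n\ge 3$. Consider the two-graph Moran process on $n$ vertices in which the resident graph $G_R$ is the clique $K_n$ and the mutant graph $G_M$ is the undirected star $K_{1,n-1}$. For every $r>0$, the fixation probability satisfies $$f_{G_R,G_M}(r)\le \frac{r^{n-1}}{(n-2)!}.$$
   Context: Two-graph Moran process: vertex set $V=\{1,\dots,n\}$; resident graph $G_R=(V,E_R)$ and mutant graph $G_M=(V,E_M)$, strongly connected, with row-stochastic weight matrices $W_R=[w^R_{ij}]$, $W_M=[w^M_{ij}]$ ($w^R_{ij}>0$ iff $(i,j)\in E_R$, similarly for $M$). The state is the mutant set $S$; residents have fitness $1$, mutants fitness $r>0$. Each step a vertex $i$ is chosen with probability proportional to fitness; if $i$ is a mutant, it picks $j$ with probability $w^M_{ij}$ and $j$ becomes a mutant; if a resident, it picks $j$ with probability $w^R_{ij}$ and $j$ becomes a resident. Absorption at $S=\emptyset$ or $S=V$ (fixation). The fixation probability $f_{G_R,G_M}(r)$ is the probability of fixation when starting with one mutant at a uniformly random vertex. Undirected graphs are unweighted: $w_{ij}=1/\deg(i)$ for each neighbour $j$ of $i$. *)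

(* Defs.v *)
From HB Require Import structures.
From mathcomp Require Import all_boot all_order all_algebra.
From mathcomp Require Import all_classical all_reals topology normedtype sequences.
Set Implicit Arguments. Unset Strict Implicit. Unset Printing Implicit Defensive.
Import Order.TTheory GRing.Theory Num.Theory numFieldNormedType.Exports.
Local Open Scope ring_scope.

(* Vertex set V = 'I_n; a state is the mutant set S : {set 'I_n}. *)

Definition fitness (R : realType) (n : nat) (r : R) (S : {set 'I_n}) (i : 'I_n) : R :=
  if i \in S then r else 1.

Definition total_fitness (R : realType) (n : nat) (r : R) (S : {set 'I_n}) : R :=
  \sum_(i : 'I_n) fitness r S i.

(* State reached when i reproduces onto j. *)
Definition moran_next (n : nat) (S : {set 'I_n}) (i j : 'I_n) : {set 'I_n} :=
  if i \in S then j |: S else S :\ j.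

(* One-step transition probability of the two-graph Moran process,
   WR / WM the (row-stochastic) resident / mutant weight matrices. *)
Definition moran_trans (R : realType) (n : nat) (WR WM : 'I_n -> 'I_n -> R) (r : R)
  (S T : {set 'I_n}) : R :=
  \sum_(i : 'I_n) \sum_(j : 'I_n)
     (fitness r S i / total_fitness r S) * (if i \in S then WM i j else WR i j)
     * (moran_next S i j == T)%:R.

Fixpoint moran_dist (R : realType) (n : nat) (WR WM : 'I_n -> 'I_n -> R) (r : R)
  (S0 : {set 'I_n}) (t : nat) {struct t} : {set 'I_n} -> R :=
  match t with
  | 0 => fun T => (T == S0)%:R
  | t'.+1 => fun T => \sum_(S : {set 'I_n}) moran_dist WR WM r S0 t' S * moran_trans WR WM r S T
  end.

(* Fixation probability from S0: probability of eventual absorption in V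
   (V is absorbing, so this is the limit of P(X_t = V)). *)
Definition fixation_from (R : realType) (n : nat) (WR WM : 'I_n -> 'I_n -> R) (r : R)
  (S0 : {set 'I_n}) : R :=
  limn (fun t => moran_dist WR WM r S0 t [set: 'I_n]).

Definition fixation_probability (R : realType) (n : nat) (WR WM : 'I_n -> 'I_n -> R)
  (r : R) : R :=
  (n%:R)^-1 * \sum_(i : 'I_n) fixation_from WR WM r [set i].

Definition unweighted (R : realType) (n : nat) (e : rel 'I_n) (i j : 'I_n) : R :=
  if e i j then (#|[set k | e i k]|%:R)^-1 else 0.

Definition clique_rel (n : nat) : rel 'I_n := fun i j => i != j.

Definition star_rel (n : nat) (c : 'I_n) : rel 'I_n := fun i j => (i == c) != (j == c).

(* Main.v *)
Require Import Defs.
From HB Require Import structures.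
From mathcomp Require Import all_boot all_order all_algebra.
From mathcomp Require Import all_classical all_reals topology normedtype sequences.
From mathcomp Require Import ring lra.
Import Order.TTheory GRing.Theory Num.Theory numFieldNormedType.Exports.
Set Implicit Arguments. Unset Strict Implicit. Unset Printing Implicit Defensive.
Local Open Scope ring_scope.
Definition mp (k : nat) : nat := if (2 <= k)%N then k.+1 else k.
Definition Af (R : realType) (r : R) (k : nat) : R :=
  if k is k'.+1 then 1 + \sum_(j < k') (j`!)%:R / r ^+ j.+1 else 0.
Definition mf n (c : 'I_n) (S : {set 'I_n}) : nat := if c \in S then #|S| else mp #|S|.
Definition psi (R : realType) (r : R) n (c : 'I_n) (S : {set 'I_n}) := Af r (mf c S).

Lemma clique_W (R : realType) n (i j : 'I_n) :
  unweighted R (@clique_rel n) i j = if i != j then (n.-1%:R)^-1 else 0.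
Proof.
rewrite /unweighted /clique_rel.
rewrite (_ : [set k | i != k] = [set~ i]) ?cardsC1 ?card_ord //.
by apply/setP => k; rewrite !inE eq_sym.
Qed.

Lemma star_Wc (R : realType) n (c j : 'I_n) :
  unweighted R (star_rel c) c j = if j != c then (n.-1%:R)^-1 else 0.
Proof.
rewrite /unweighted /star_rel eqxx /=.
rewrite (_ : [set k | true != (k == c)] = [set~ c]) ?cardsC1 ?card_ord //.
by apply/setP => k; rewrite !inE.
Qed.

Lemma star_Wl (R : realType) n (c i j : 'I_n) : i != c ->
  unweighted R (star_rel c) i j = (j == c)%:R.
Proof.
move=> /negbTE ic; rewrite /unweighted /star_rel ic /=.
rewrite (_ : [set k | false != (k == c)] = [set c]) ?cards1 ?invr1.
  by case: (j == c) => //=; rewrite ?invr1.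
by apply/setP => k; rewrite !inE; case: (k == c).
Qed.

Lemma unweighted_sum (R : realType) n (e : rel 'I_n) i :
  (0 < #|[set k | e i k]|)%N -> \sum_j unweighted R e i j = 1.
Proof.
move=> h; rewrite /unweighted -big_mkcond /= sumr_const.
rewrite (_ : #|_| = #|[set k | e i k]|); last by apply: eq_card => k; rewrite inE.
have hn : (#|[set k | e i k]|%:R : R) != 0 by rewrite pnatr_eq0 -lt0n.
by rewrite -(mulr_natr (#|[set k | e i k]|%:R^-1)) mulVf.

Qed.

Lemma unweighted_ge0 (R : realType) n (e : rel 'I_n) i j : 0 <= unweighted R e i j.
Proof. by rewrite /unweighted; case: (e i j) => //; rewrite invr_ge0. Qed.

Lemma cardU1n n (S : {set 'I_n}) j : j \notin S -> #|j |: S| = #|S|.+1.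
Proof. by move=> h; rewrite cardsU1 h. Qed.

Lemma cardD1n n (S : {set 'I_n}) j : j \in S -> #|S :\ j| = #|S|.-1.
Proof. by move=> h; rewrite (cardsD1 j S) h. Qed.

Lemma setU1_in n (S : {set 'I_n}) j : j \in S -> j |: S = S.
Proof. by move=> h; apply/setP => x; rewrite !inE; case: eqP => // ->. Qed.

Lemma setD1_out n (S : {set 'I_n}) j : j \notin S -> S :\ j = S.
Proof. by move=> h; apply/setP => x; rewrite !inE; case: eqP => // ->; rewrite (negbTE h). Qed.
Lemma Af0 (R : realType) (r : R) : Af r 0 = 0. Proof. by []. Qed.
Lemma Af1 (R : realType) (r : R) : Af r 1 = 1. Proof. by rewrite /= big_ord0 addr0. Qed.
Lemma Af_step (R : realType) (r : R) k : Af r k.+2 = Af r k.+1 + (k`!)%:R / r ^+ k.+1.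
Proof. by rewrite /Af big_ord_recr /= addrA. Qed.

Lemma Af_ge0 (R : realType) (r : R) k : 0 < r -> 0 <= Af r k.
Proof.
move=> r0; case: k => [|k] //=; apply: addr_ge0 => //; apply: sumr_ge0 => j _.
by apply: divr_ge0 => //; apply: exprn_ge0; exact: ltW.
Qed.

Lemma Af_le (R : realType) (r : R) i j : 0 < r -> (i <= j)%N -> Af r i <= Af r j.
Proof.
move=> r0 /subnK <-; elim: (j - i)%N => [|d IH] //.
rewrite addSn; apply: le_trans IH _.
case: (d + i)%N => [|k]; first by rewrite Af0 Af1.
rewrite Af_step lerDl; apply: divr_ge0 => //; apply: exprn_ge0; exact: ltW.
Qed.

Lemma key1 (R : realType) (r : R) k : 0 < r -> (1 <= k)%N ->
  r * (Af r k.+1 - Af r k) + (Af r (mp k.-1) - Af r k) + (k.-1)%:R * (Af r k.-1 - Af r k) <= 0.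
Proof.
move=> r0; have rn0 : r != 0 by rewrite gt_eqF.
case: k => [|[|[|k]]] // _.
- have -> : mp 0 = 0%N by [].
  rewrite (Af_step r 0) Af1 Af0 fact0 expr1 mul0r addr0 [1 + _]addrC addrK mul1r mulfV //.
  lra.
- have -> : mp 1 = 1%N by [].
  rewrite (Af_step r 1) (Af_step r 0) Af1 fact0 factS fact0 expr1 expr2 /= mul1r.
  have : 0 < r^-1 by rewrite invr_gt0.
  move=> h. rewrite !addrA.
  have -> : r * (1 + r^-1 + (1 * 1)%:R / (r * r) - (1 + r^-1)) = r^-1 by field.
  lra.
- have -> : mp k.+2 = k.+3 by [].
  have -> : k.+3.-1 = k.+2 by [].
  rewrite subrr addr0.
  have h1 : Af r k.+4 - Af r k.+3 = (k.+2`!)%:R / r ^+ k.+3 by rewrite (Af_step r k.+2); ring.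
  have h2 : Af r k.+2 - Af r k.+3 = - ((k.+1`!)%:R / r ^+ k.+2) by rewrite (Af_step r k.+1); ring.
  rewrite h1 h2 factS natrM exprS.
  have -> : r * ((k.+2)%:R * (k.+1`!)%:R / (r * r ^+ k.+2)) = (k.+2)%:R * ((k.+1`!)%:R / r ^+ k.+2).
    by field; rewrite expf_neq0 // rn0.
  lra.
Qed.


Lemma psi_in (R : realType) (r : R) n (c : 'I_n) (S : {set 'I_n}) : c \in S -> psi r c S = Af r #|S|.
Proof. by move=> h; rewrite /psi /mf h. Qed.
Lemma psi_out (R : realType) (r : R) n (c : 'I_n) (S : {set 'I_n}) : c \notin S -> psi r c S = Af r (mp #|S|).
Proof. by move=> h; rewrite /psi /mf (negbTE h). Qed.

Lemma inner_res (R : realType) (r : R) n (c : 'I_n) (S : {set 'I_n}) i : i \notin S ->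
  \sum_j unweighted R (@clique_rel n) i j * (psi r c (S :\ j) - psi r c S)
  = (n.-1%:R)^-1 * \sum_(j in S) (psi r c (S :\ j) - psi r c S).
Proof.
move=> iS; rewrite mulr_sumr [RHS]big_mkcond /=; apply: eq_bigr => j _; rewrite clique_W.
case: (boolP (j \in S)) => jS.
  by have -> : i != j by apply: contraNneq iS => ->.
by rewrite setD1_out // subrr mulr0.
Qed.

Lemma inner_centre (R : realType) (r : R) n (c : 'I_n) (S : {set 'I_n}) : c \in S ->
  \sum_j unweighted R (star_rel c) c j * (psi r c (j |: S) - psi r c S)
  = (n.-1%:R)^-1 * ((Af r #|S|.+1 - Af r #|S|) *+ #|~: S|).
Proof.
move=> cS; rewrite (bigID (mem S)) /= big1 ?add0r; last first.
  by move=> j jS; rewrite setU1_in // subrr mulr0.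
rewrite (eq_bigl (fun j => j \in ~: S)); last by move=> j; rewrite inE.
rewrite (eq_bigr (fun _ => (n.-1%:R)^-1 * (Af r #|S|.+1 - Af r #|S|))); last first.
  move=> j; rewrite inE => jS; rewrite star_Wc.
  have -> : j != c by apply: contraNneq jS => ->.
  by rewrite (psi_in r) ?cardU1n ?(psi_in r) // !inE cS orbT.
by rewrite sumr_const mulrnAr.
Qed.

Lemma inner_leaf (R : realType) (r : R) n (c : 'I_n) (S : {set 'I_n}) i : i != c ->
  \sum_j unweighted R (star_rel c) i j * (psi r c (j |: S) - psi r c S)
  = psi r c (c |: S) - psi r c S.
Proof.
move=> ic; rewrite (bigD1 c) //= star_Wl // eqxx mul1r big1 ?addr0 // => j jc.
by rewrite star_Wl // (negbTE jc) mul0r.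
Qed.

Lemma DS_in (R : realType) (r : R) n (c : 'I_n) (S : {set 'I_n}) : c \in S ->
  \sum_(j in S) (psi r c (S :\ j) - psi r c S)
  = (Af r (mp #|S|.-1) - Af r #|S|) + (Af r #|S|.-1 - Af r #|S|) *+ #|S|.-1.
Proof.
move=> cS; rewrite (big_setD1 c cS) /= (psi_out r) ?(psi_in r cS) ?cardD1n //; last by rewrite !inE eqxx.
congr (_ + _).
rewrite (eq_bigr (fun _ => Af r #|S|.-1 - Af r #|S|)); first by rewrite sumr_const cardD1n.
move=> j; rewrite !inE => /andP [jc jS].
by rewrite (psi_in r) ?cardD1n // !inE eq_sym jc.
Qed.

Lemma DS_out (R : realType) (r : R) n (c : 'I_n) (S : {set 'I_n}) : c \notin S ->
  \sum_(j in S) (psi r c (S :\ j) - psi r c S)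
  = (Af r (mp #|S|.-1) - Af r (mp #|S|)) *+ #|S|.
Proof.
move=> cS; rewrite (eq_bigr (fun _ => Af r (mp #|S|.-1) - Af r (mp #|S|))); first by rewrite sumr_const.
by move=> j jS; rewrite !(psi_out r) ?cardD1n // !inE negb_and cS orbT.
Qed.

Lemma step3 (R : realType) (r : R) n (c : 'I_n) (S : {set 'I_n}) :
  (2 <= n)%N -> 0 < r ->
  \sum_i fitness r S i * \sum_j
     ((if i \in S then unweighted R (star_rel c) i j else unweighted R (@clique_rel n) i j)
       * (psi r c (moran_next S i j) - psi r c S)) <= 0.
Proof.
move=> n2 r0.
have hkk : (#|S| + #|~: S| = n)%N by rewrite cardsC card_ord.
have n1 : (0 < n.-1%:R :> R) by rewrite ltr0n -subn1 subn_gt0.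
rewrite (bigID (mem S)) /=.
rewrite (eq_bigr (fun i => r * \sum_j unweighted R (star_rel c) i j * (psi r c (j |: S) - psi r c S))); last first.
  by move=> i iS; rewrite /fitness /moran_next iS.
rewrite [X in _ + X](eq_bigl (fun i => i \in ~: S)); last by move=> i; rewrite inE.
rewrite [X in _ + X](eq_bigr (fun i => (n.-1%:R)^-1 * \sum_(j in S) (psi r c (S :\ j) - psi r c S))); last first.
  move=> i; rewrite inE => iS; rewrite /fitness /moran_next (negbTE iS) mul1r.
  exact: inner_res.
rewrite sumr_const.
case: (boolP (c \in S)) => cS.
- rewrite (bigD1 c cS) /= [X in _ + X + _]big1 ?addr0; last first.
    by move=> i /andP [iS ic]; rewrite inner_leaf // setU1_in // subrr mulr0.
  rewrite inner_centre // DS_in //.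
  have k1 : (1 <= #|S|)%N by rewrite card_gt0; apply/set0Pn; exists c.
  have := key1 r0 k1.
  set X := (X in X <= 0 -> _) => hX.
  set L := (X in X <= 0).
  have -> : L = (#|~: S|%:R * (n.-1%:R)^-1) * X.
    rewrite /L /X; move: (Af r #|S|.+1) (Af r #|S|) (Af r (mp #|S|.-1)) (Af r #|S|.-1) => a b d e.
    move: (#|~: S|) (#|S|.-1) (n.-1) => K M N; ring.
  apply: mulr_ge0_le0 => //; apply: mulr_ge0 => //; rewrite invr_ge0; exact: ltW.
- rewrite (eq_bigr (fun _ => r * (Af r #|S|.+1 - Af r (mp #|S|)))); last first.
    move=> i iS; rewrite inner_leaf; last by apply: contraNneq cS => <-.
    by rewrite (psi_in r) ?(psi_out r) ?cardU1n // !inE eqxx.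
  rewrite sumr_const DS_out //.
  move: hkk; case: #|S| => [|[|k]] hkk.
  + by rewrite !mulr0n mulr0 mul0rn addr0.
  + have hK : #|~: S| = n.-1.
      by apply/eqP; rewrite -(eqn_add2l 1) hkk add1n prednK // ltnW.
    rewrite hK (_ : mp 1 = 1%N) // (_ : mp 0 = 0%N) // (Af_step r 0) Af1 Af0 fact0 expr1.
    have rn : r != 0 by rewrite gt_eqF.
    have nn : (n.-1%:R : R) != 0 by rewrite gt_eqF.
    move: nn; move: (n.-1) => N nn.
    have -> : r * (1 + 1%:R / r - 1) *+ 1 + N%:R^-1 * ((0 - 1) *+ 1) *+ N = 0.
      rewrite !mulr1n -(mulr_natr (N%:R^-1 * (0 - 1))). by field; rewrite nn rn.
    by [].
  + rewrite (_ : mp k.+2 = k.+3) // subrr mulr0 mul0rn add0r.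
    apply: mulrn_wle0; apply: mulr_ge0_le0; first by rewrite invr_ge0 ltW.
    apply: mulrn_wle0; rewrite subr_le0; apply: Af_le => //.
    by rewrite /mp /=; case: ifP => _ //; apply: leqW.
Qed.

Lemma exists_other n (i : 'I_n) : (1 < n)%N -> exists k : 'I_n, k != i.
Proof.
move=> n2; have h0 : (0 < n)%N by apply: ltnW.
case: (eqVneq i (Ordinal h0)) => [->|h]; last by exists (Ordinal h0); rewrite eq_sym.
by exists (Ordinal n2); apply/eqP => /(congr1 val).
Qed.

Lemma rows (R : realType) n (c : 'I_n) (S : {set 'I_n}) i : (1 < n)%N ->
  \sum_j (if i \in S then unweighted R (star_rel c) i j else unweighted R (@clique_rel n) i j) = 1.
Proof.
move=> n2; case: (i \in S); apply: unweighted_sum; rewrite card_gt0; apply/set0Pn.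
- case: (eqVneq i c) => [->|ic].
    by have [k hk] := exists_other c n2; exists k; rewrite inE /star_rel eqxx (negbTE hk).
  by exists c; rewrite inE /star_rel eqxx (negbTE ic).
- by have [k hk] := exists_other i n2; exists k; rewrite inE /clique_rel eq_sym.
Qed.

Lemma F_gt0 (R : realType) n (c : 'I_n) (r : R) (S : {set 'I_n}) : 0 < r -> 0 < total_fitness r S.
Proof.
move=> r0; have h i : 0 < fitness r S i by rewrite /fitness; case: (i \in S).
rewrite /total_fitness (bigD1 c) //=; apply: lt_le_trans (h c) _.
by rewrite lerDl; apply: sumr_ge0 => i _; exact: ltW.
Qed.

Lemma total_one (R : realType) n (c : 'I_n) (r : R) (S : {set 'I_n}) : (1 < n)%N -> 0 < r ->
  \sum_i \sum_j (fitness r S i / total_fitness r S *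
     (if i \in S then unweighted R (star_rel c) i j else unweighted R (@clique_rel n) i j)) = 1.
Proof.
move=> n2 r0; have F0 := F_gt0 c S r0.
transitivity (\sum_i fitness r S i / total_fitness r S).
  by apply: eq_bigr => i _; rewrite -mulr_sumr rows // mulr1.
by rewrite -mulr_suml mulfV // gt_eqF.
Qed.

Lemma trans_ge0 (R : realType) n (c : 'I_n) (r : R) (S T : {set 'I_n}) : 0 < r ->
  0 <= moran_trans (unweighted R (@clique_rel n)) (unweighted R (star_rel c)) r S T.
Proof.
move=> r0; have F0 := F_gt0 c S r0.
apply: sumr_ge0 => i _; apply: sumr_ge0 => j _; apply: mulr_ge0; last by case: (_ == _).
apply: mulr_ge0; last by case: (i \in S); exact: unweighted_ge0.
apply: divr_ge0; last exact: ltW.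
by rewrite /fitness; case: (i \in S) => //; exact: ltW.
Qed.

Lemma super (R : realType) n (c : 'I_n) (r : R) (S : {set 'I_n}) : (1 < n)%N -> 0 < r ->
  \sum_T moran_trans (unweighted R (@clique_rel n)) (unweighted R (star_rel c)) r S T * psi r c T
  <= psi r c S.
Proof.
move=> n2 r0; have F0 := F_gt0 c S r0.
set W := fun i j => (if i \in S then unweighted R (star_rel c) i j else unweighted R (@clique_rel n) i j).
set F := total_fitness r S.
have step1 : \sum_T moran_trans (unweighted R (@clique_rel n)) (unweighted R (star_rel c)) r S T * psi r c T
   = \sum_i \sum_j (fitness r S i / F * W i j) * psi r c (moran_next S i j).
  transitivity (\sum_T \sum_i \sum_j (fitness r S i / F * W i j) * ((moran_next S i j == T)%:R * psi r c T)).
    apply: eq_bigr => T _; rewrite mulr_suml; apply: eq_bigr => i _; rewrite mulr_suml.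
    by apply: eq_bigr => j _; rewrite mulrA.
  rewrite exchange_big; apply: eq_bigr => i _; rewrite exchange_big; apply: eq_bigr => j _.
  rewrite -mulr_sumr; congr (_ * _).
  rewrite (bigD1 (moran_next S i j)) //= eqxx mul1r big1 ?addr0 // => T hT.
  by rewrite eq_sym (negbTE hT) mul0r.
have hS : psi r c S = \sum_i \sum_j (fitness r S i / F * W i j) * psi r c S.
  by rewrite -[LHS]mul1r -(total_one c S n2 r0) mulr_suml; apply: eq_bigr => i _; rewrite mulr_suml.
rewrite step1 -subr_le0.
have -> : \sum_i \sum_j (fitness r S i / F * W i j) * psi r c (moran_next S i j) - psi r c S
   = F^-1 * \sum_i fitness r S i * \sum_j (W i j * (psi r c (moran_next S i j) - psi r c S)).
  rewrite {1}hS -sumrB mulr_sumr; apply: eq_bigr => i _.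
  rewrite -sumrB mulr_sumr mulr_sumr; apply: eq_bigr => j _.
  move: (fitness r S i) (W i j) (psi r c (moran_next S i j)) (psi r c S) => a b x y.
  by rewrite /F; move: (total_fitness r S) => f; ring.
apply: mulr_ge0_le0; first by rewrite invr_ge0 ltW.
exact: step3.
Qed.

Lemma dist_ge0 (R : realType) n (c : 'I_n) (r : R) S0 t T : 0 < r ->
  0 <= moran_dist (unweighted R (@clique_rel n)) (unweighted R (star_rel c)) r S0 t T.
Proof.
move=> r0; elim: t T => [|t IH] T /=; first by case: (_ == _).
by apply: sumr_ge0 => S _; apply: mulr_ge0 => //; exact: trans_ge0.
Qed.

Lemma expect (R : realType) n (c : 'I_n) (r : R) S0 t : (1 < n)%N -> 0 < r ->
  \sum_T moran_dist (unweighted R (@clique_rel n)) (unweighted R (star_rel c)) r S0 t T * psi r c T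
  <= psi r c S0.
Proof.
move=> n2 r0; elim: t => [|t IH] /=.
  rewrite (bigD1 S0) //= eqxx mul1r big1 ?addr0 // => T hT.
  by rewrite (negbTE hT) mul0r.
apply: le_trans IH.
under eq_bigr do rewrite mulr_suml.
rewrite exchange_big; apply: ler_sum => S _.
under eq_bigr do rewrite -mulrA.
rewrite -mulr_sumr; apply: ler_wpM2l; first exact: dist_ge0.
exact: super.
Qed.

Lemma psiT (R : realType) n (c : 'I_n) (r : R) : psi r c [set: 'I_n] = Af r n.
Proof. by rewrite (psi_in r) ?inE // cardsT card_ord. Qed.

Lemma psi1 (R : realType) n (c : 'I_n) (r : R) i : psi r c [set i] = 1.
Proof.
rewrite /psi /mf cards1; case: (c \in [set i]); first exact: Af1.
by rewrite /mp /=; exact: Af1.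
Qed.

Lemma distV (R : realType) n (c : 'I_n) (r : R) S0 t : (1 < n)%N -> 0 < r ->
  moran_dist (unweighted R (@clique_rel n)) (unweighted R (star_rel c)) r S0 t [set: 'I_n] * Af r n
  <= psi r c S0.
Proof.
move=> n2 r0; apply: le_trans (expect c S0 t n2 r0).
rewrite (bigD1 [set: 'I_n]) //= psiT lerDl; apply: sumr_ge0 => T _.
by apply: mulr_ge0; [exact: dist_ge0 | exact: Af_ge0].
Qed.

Lemma transVV (R : realType) n (c : 'I_n) (r : R) : (1 < n)%N -> 0 < r ->
  moran_trans (unweighted R (@clique_rel n)) (unweighted R (star_rel c)) r [set: 'I_n] [set: 'I_n] = 1.
Proof.
move=> n2 r0; rewrite -(total_one c [set: 'I_n] n2 r0); apply: eq_bigr => i _; apply: eq_bigr => j _.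
rewrite /moran_next inE (_ : j |: [set: 'I_n] = [set: 'I_n]) ?eqxx ?mulr1 //.
by apply/setP => x; rewrite !inE orbT.
Qed.

Lemma dist_mono (R : realType) n (c : 'I_n) (r : R) S0 t : (1 < n)%N -> 0 < r ->
  moran_dist (unweighted R (@clique_rel n)) (unweighted R (star_rel c)) r S0 t [set: 'I_n]
  <= moran_dist (unweighted R (@clique_rel n)) (unweighted R (star_rel c)) r S0 t.+1 [set: 'I_n].
Proof.
move=> n2 r0 /=; rewrite (bigD1 [set: 'I_n]) //= transVV // mulr1 lerDl.
by apply: sumr_ge0 => S _; apply: mulr_ge0; [exact: dist_ge0 | exact: trans_ge0].
Qed.

Lemma fix_le (R : realType) n (c : 'I_n) (r : R) S0 : (1 < n)%N -> 0 < r ->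
  fixation_from (unweighted R (@clique_rel n)) (unweighted R (star_rel c)) r S0 <= psi r c S0 / Af r n.
Proof.
move=> n2 r0.
have An : 0 < Af r n.
  case: n c S0 n2 => [|m] // c S0 _; rewrite /=; apply: (lt_le_trans ltr01); rewrite lerDl.
  apply: sumr_ge0 => j _; apply: divr_ge0 => //; apply: exprn_ge0; exact: ltW.
set u := fun t => moran_dist (unweighted R (@clique_rel n)) (unweighted R (star_rel c)) r S0 t [set: 'I_n].
have ub t : u t <= psi r c S0 / Af r n by rewrite ler_pdivlMr //; exact: distV.
have cu : cvgn u.
  apply: nondecreasing_is_cvgn.
    by apply/nondecreasing_seqP => t; exact: dist_mono.
  by exists (psi r c S0 / Af r n) => _ [t _ <-].
rewrite /fixation_from; apply: limr_le => //; exact: nearW.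
Qed.
Unset Implicit Arguments.
Theorem theorem4 (R : realType) (n : nat) (c : 'I_n) (r : R) :
  (3 <= n)%N -> 0 < r ->
  fixation_probability (unweighted R (@clique_rel n)) (unweighted R (star_rel c)) r
    <= r ^+ n.-1 / ((n.-2)`!)%:R.
Proof.
move=> n3 r0; have n2 : (1 < n)%N by apply: ltnW.
rewrite /fixation_probability.
apply: (@le_trans _ _ (n%:R^-1 * \sum_(i : 'I_n) (Af r n)^-1)).
  apply: ler_wpM2l; first by rewrite invr_ge0.
  apply: ler_sum => i _; have := fix_le c [set i] n2 r0; by rewrite psi1 mul1r.
have nn : (n%:R : R) != 0 by rewrite pnatr_eq0 -lt0n ltnW.
rewrite sumr_const card_ord -(mulr_natl (Af r n)^-1) mulrA mulVf // mul1r.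
move: nn; case: n c n3 n2 => [|[|[|m]]] // c _ _ _ /=.
have a0 : 0 < (m.+1)`!%:R / r ^+ m.+2.
  by apply: divr_gt0; [rewrite ltr0n fact_gt0 | exact: exprn_gt0].
rewrite -/(Af r m.+3) -invf_div lef_pV2 ?posrE //; last by apply: (lt_le_trans a0); rewrite Af_step lerDr Af_ge0.
by rewrite Af_step lerDr Af_ge0.
Qed.
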